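(* Let $p\ge 3$ be a prime and let $(a_n)_{n\ge0}$ be a sequence of elements of $\mathbf{Q}_p$ satisfying $a_n=ra_{n-1}+sa_{n-2}$ ($n\ge2$) for some $r,s\in\mathbf{Q}_p$, given by $a_n=c_1\lambda_1^n+c_2\lambda_2^n$ for nonzero $c_1,c_2,\lambda_1,\lambda_2$ which all lie in $\mathbf{Q}_p$ or all lie in some unramified quadratic extension $\mathbf{Q}_p(\sqrt d)$ of $\mathbf{Q}_p$. Suppose $|\lambda_1|_p=|\lambda_2|_p>0$ and $\lambda_2/\lambda_1$ is not a root of unity. Let $l$ be the order of $\lambda_2/\lambda_1$ modulo $p$ and $k=\nu_p\big((\lambda_2/\lambda_1)^l-1\big)$. Let $K$ be the Kepler set of $(a_n)$ and let $\Lambda$ be the closure of $\{(\lambda_2/\lambda_1)^n: n\in\mathbf{N}\}$. <ol> <li>If $-c_1/c_2\notin\Lambda$, then $$K=\bigsqcup_{i=0}^{l-1}\left(\frac{a_{i+1}}{a_i}+p^{\nu_p(c_1/c_2)+\nu_p(\lambda_2-\lambda_1)-2\nu_p\left(c_1/c_2+(\lambda_2/\lambda_1)^i\right)+k}\mathbf{Z}_p\right).$$</li> <li>If $-c_1/c_2\in\Lambda$ and $l=1$, then $K=\mathbf{Q}_p\setminus\left(\frac{\lambda_1+\lambda_2}{2}+p^{1+\nu_p(\lambda_2)}\mathbf{Z}_p\right)$.</li> <li>If $-c_1/c_2\in\Lambda$, $l\ge2$, and $s\in\{0,1,\dots,l-1\}$ is defined by $(\lambda_2/\lambda_1)^s\equiv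 -c_1/c_2 \pmod{p^k}$, then $$K=\bigsqcup_{i=0,\,i\ne s}^{l-1}\left(\frac{a_{i+1}}{a_i}+p^{\nu_p(\lambda_2-\lambda_1)+k}\mathbf{Z}_p\right)\ \bigsqcup\ \left(\mathbf{Q}_p\setminus p^{\nu_p(\lambda_2)+1-k}\mathbf{Z}_p\right).$$</li> </ol>
   Context: The Kepler set of a sequence $(a_n)_{n\ge0}$ in $\mathbf{Q}_p$ is the closure in $\mathbf{Q}_p$ of $\{a_{n+1}/a_n : n\ge0,\ a_n\ne0\}$. $\nu_p$ denotes the $p$-adic valuation on $\mathbf{Q}_p$ and its unique extension to $\mathbf{Q}_p(\sqrt d)$ with $\nu_p(p)=1$; $|x|_p=p^{-\nu_p(x)}$. The unramified quadratic extension is $\mathbf{Q}_p(\sqrt d)$ with $d\in\mathbf{Z}_p^*$ a non-square; its ring of integers is $\mathbf{Z}_p[\sqrt d]$. For $x,y$ in the ring of integers and $m\ge1$, $x\equiv y\pmod{p^m}$ means $x-y\in p^m$ times the ring of integers. For a unit $u$ of the ring of integers, the order of $u$ modulo $p$ is the least $l\ge1$ with $u^l\equiv1\pmod p$. The closure $\Lambda$ is taken in the field containing $\lambda_1,\lambda_2$; $\bigsqcup$ denotes disjoint union. *)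

(* Defs.v *)
(* Q_p and its unramified quadratic extension are given
   axiomatically (as binders with hypotheses) inside a field L equipped with
   a Z-valued valuation v. *)
From mathcomp Require Import all_boot all_order all_algebra.
Set Implicit Arguments. Unset Strict Implicit. Unset Printing Implicit Defensive.
Import Order.TTheory GRing.Theory Num.Theory.
Local Open Scope ring_scope.

Definition vclose (L : fieldType) (v : L -> int) (m : int) (x y : L) : Prop :=
  x = y \/ m <= v (x - y).

(* v is a (discrete, Z-valued) valuation with v(p) = 1; v 0 is irrelevant. *)
Definition is_p_valuation (L : fieldType) (p : nat) (v : L -> int) : Prop :=
  [/\ forall x y : L, x != 0 -> y != 0 -> v (x * y) = v x + v y,
      forall x y : L, x != 0 -> y != 0 -> x + y != 0 ->
        Num.min (v x) (v y) <= v (x + y)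
    & v (p%:R) = 1].

Definition is_subfield (L : fieldType) (Qp : {pred L}) : Prop :=
  [/\ 0 \in Qp /\ 1 \in Qp,
      forall x y, x \in Qp -> y \in Qp -> x + y \in Qp,
      forall x, x \in Qp -> - x \in Qp,
      forall x y, x \in Qp -> y \in Qp -> x * y \in Qp
    & forall x, x \in Qp -> x^-1 \in Qp].

(* Qp (with the restriction of v) is the field of p-adic numbers:
   characteristic 0 subfield, complete for v, with residue field F_p
   (every element of valuation >= 0 is congruent mod p to an integer).
   Together with v(p) = 1 this characterizes Q_p up to isometric isomorphism. *)
Definition is_Qp_in (L : fieldType) (p : nat) (v : L -> int) (Qp : {pred L}) : Prop :=
  [/\ is_p_valuation p v,
      is_subfield Qp,
      forall n : nat, (n.+1)%:R != 0 :> L,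
      forall x, x \in Qp -> x != 0 -> 0 <= v x -> exists n : nat, vclose v 1 x n%:R
    & forall u : nat -> L, (forall n, u n \in Qp) ->
        (forall m : int, exists N : nat, forall i j : nat, (N <= i)%N -> (N <= j)%N ->
           vclose v m (u i) (u j)) ->
        exists2 x, x \in Qp & forall m : int, exists N : nat, forall n : nat,
           (N <= n)%N -> vclose v m (u n) x].

Definition Qp_or_unramified_quadratic (L : fieldType) (v : L -> int) (Qp : {pred L}) : Prop :=
  (forall x : L, x \in Qp) \/
  exists d delta : L,
    [/\ d \in Qp /\ d != 0, v d = 0, (forall y, y \in Qp -> y ^+ 2 != d),
        delta ^+ 2 = d
      & forall x : L, exists a b, [/\ a \in Qp, b \in Qp & x = a + b * delta]].

Definition vclosure (L : fieldType) (v : L -> int) (A S : L -> Prop) : L -> Prop :=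
  fun x => A x /\ forall m : int, exists y, S y /\ vclose v m y x.

Definition kepler_set (L : fieldType) (v : L -> int) (Qp : {pred L}) (a : nat -> L)
  : L -> Prop :=
  vclosure v (fun x => x \in Qp) (fun y => exists n : nat, a n != 0 /\ y = a n.+1 / a n).

Definition order_modp (L : fieldType) (v : L -> int) (u : L) (l : nat) : Prop :=
  [/\ (1 <= l)%N, vclose v 1 (u ^+ l) 1
    & forall j : nat, (1 <= j)%N -> (j < l)%N -> ~ vclose v 1 (u ^+ j) 1].

Definition pball (L : fieldType) (v : L -> int) (Qp : {pred L}) (c : L) (e : int)
  : L -> Prop :=
  fun x => x \in Qp /\ vclose v e x c.

(* Main.v *)
Require Import Defs.
From mathcomp Require Import all_boot all_order all_algebra.
From mathcomp Require Import zify ring lra.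
Import Order.TTheory GRing.Theory Num.Theory.
Local Open Scope ring_scope.
Set Warnings "-notation-overridden -ambiguous-paths".
Set Implicit Arguments. Unset Strict Implicit. Unset Printing Implicit Defensive.

Section Val.
Variables (L : fieldType) (p : nat) (v : L -> int).
Hypothesis hvM : forall x y : L, x != 0 -> y != 0 -> v (x * y) = v x + v y.
Hypothesis hvD : forall x y : L, x != 0 -> y != 0 -> x + y != 0 ->
        Num.min (v x) (v y) <= v (x + y).
Hypothesis hvp : v (p%:R) = 1.
Hypothesis hchar : forall n : nat, (n.+1)%:R != 0 :> L.
Hypothesis pprime : prime p.
Hypothesis p2 : (2 < p)%N.

Lemma vM {x y : L} : x != 0 -> y != 0 -> v (x * y) = v x + v y.
Proof. exact: hvM. Qed.
Lemma vD {x y : L} : x != 0 -> y != 0 -> x + y != 0 -> Num.min (v x) (v y) <= v (x + y).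
Proof. exact: hvD. Qed.

Definition dv (m : int) (x : L) : bool := (x == 0) || (m <= v x).

Lemma vcloseE m (x y : L) : vclose v m x y <-> dv m (x - y).
Proof.
rewrite /vclose /dv subr_eq0; split.
  by case=> [->|h]; [rewrite eqxx | rewrite h orbT].
by case/orP=> [/eqP|]; [left|right].
Qed.

Lemma dvP m (x : L) : dv m x -> x != 0 -> m <= v x.
Proof. by rewrite /dv; case: eqP. Qed.

Lemma dv0 m : dv m 0.
Proof. by rewrite /dv eqxx. Qed.

Lemma dvI m (x : L) : m <= v x -> dv m x.
Proof. by move=> h; rewrite /dv h orbT. Qed.

Lemma dv_le m m' (x : L) : m' <= m -> dv m x -> dv m' x.
Proof. by move=> hm /orP[h|h]; rewrite /dv ?h // (le_trans hm h) orbT. Qed.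

Lemma v1 : v 1 = 0.
Proof. have := @vM 1 1 (oner_neq0 _) (oner_neq0 _); rewrite mulr1; lia. Qed.

Lemma vN1 : v (-1) = 0.
Proof.
have h1 : (-1 : L) != 0 by rewrite oppr_eq0 oner_neq0.
have := vM h1 h1; rewrite mulrNN mulr1 v1; lia.
Qed.

Lemma vN (x : L) : v (- x) = v x.
Proof.
have [->|hx] := eqVneq x 0; first by rewrite oppr0.
have h1 : (-1 : L) != 0 by rewrite oppr_eq0 oner_neq0.
by rewrite -mulN1r vM // vN1 add0r.
Qed.

Lemma vV (x : L) : x != 0 -> v (x^-1) = - v x.
Proof.
move=> hx; have hi : x^-1 != 0 by rewrite invr_eq0.
have := vM hx hi; rewrite mulfV // v1; lia.
Qed.

Lemma vX (x : L) n : x != 0 -> v (x ^+ n) = n%:Z * v x.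
Proof.
move=> hx; elim: n => [|n IH]; first by rewrite expr0 v1 mul0r.
rewrite exprS vM ?expf_neq0 // IH; lia.
Qed.

Lemma vdiv (x y : L) : x != 0 -> y != 0 -> v (x / y) = v x - v y.
Proof. by move=> hx hy; rewrite vM ?invr_eq0 // vV. Qed.

Lemma vD_lt (x y : L) : x != 0 -> dv (v x + 1) y -> x + y != 0 /\ v (x + y) = v x.
Proof.
move=> hx; have [->|hy] := eqVneq y 0; first by rewrite addr0.
move=> /dvP /(_ hy) hlt.
have hxy : x + y != 0.
  apply/negP => /eqP h; have : y = - x by rewrite -(addKr x y) h addr0.
  move=> e; move: hlt; rewrite e vN; lia.
split=> //; have h1 := vD hx hy hxy.
have h2 : x = (x + y) + (- y) by rewrite addrK.
have hny : - y != 0 by rewrite oppr_eq0.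
have h3 := vD hxy hny; rewrite -h2 vN in h3; have := h3 hx; lia. Qed.

Lemma dvD m (x y : L) : dv m x -> dv m y -> dv m (x + y).
Proof.
have [->|hx] := eqVneq x 0; first by rewrite add0r.
have [->|hy] := eqVneq y 0; first by rewrite addr0.
have [->|hxy] := eqVneq (x + y) 0; first by rewrite dv0.
move=> /dvP /(_ hx) h1 /dvP /(_ hy) h2; apply: dvI.
have := vD hx hy hxy; lia.
Qed.

Lemma dvN m (x : L) : dv m x -> dv m (- x).
Proof. by rewrite /dv oppr_eq0 vN. Qed.

Lemma dvB m (x y : L) : dv m x -> dv m y -> dv m (x - y).
Proof. by move=> h1 h2; apply: dvD => //; apply: dvN. Qed.

Lemma dvM a b (x y : L) : dv a x -> dv b y -> dv (a + b) (x * y).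
Proof.
have [->|hx] := eqVneq x 0; first by move=> *; rewrite mul0r dv0.
have [->|hy] := eqVneq y 0; first by move=> *; rewrite mulr0 dv0.
move=> /dvP /(_ hx) h1 /dvP /(_ hy) h2; apply: dvI; rewrite vM //; lia.
Qed.

Lemma dv1 : dv 0 1.
Proof. by apply: dvI; rewrite v1. Qed.

Lemma dv_nat n : dv 0 n%:R.
Proof.
elim: n => [|n IH]; first by rewrite dv0.
by rewrite -addn1 natrD; apply: dvD => //; apply: dv1.
Qed.

Lemma dv_p : dv 1 p%:R.
Proof. by apply: dvI; rewrite hvp. Qed.

Lemma dv_pn n : dv 1 (p * n)%:R.
Proof. by rewrite natrM -(addr0 1); apply: dvM; [apply: dv_p|apply: dv_nat]. Qed.

Lemma p_gt0 : (0 < p)%N. Proof. by apply: prime_gt0. Qed.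

Lemma v_coprime (n : nat) : ~~ (p %| n)%N -> n%:R != 0 :> L /\ v n%:R = 0.
Proof.
move=> hn.
have hN : n%:R != 0 :> L by case: n hn => [|n _]; [rewrite dvdn0 | apply: hchar].
split=> //.
have hg : gcdn p n = 1%N by apply/eqP; rewrite -/(coprime p n) prime_coprime.
have [a _ /dvdnP [q hq]] := Bezoutl n p_gt0.
rewrite hg in hq.
have ge0 := dvP (dv_nat n) hN.
suff : ~ (1 <= v n%:R) by lia.
move=> h1.
have h2 : dv 1 (a * n)%:R by have := dvM (dv_nat a) (dvI h1); rewrite add0r -natrM.
have h3 : dv 1 (q * p)%:R by rewrite mulnC; apply: dv_pn.
have := dvB h3 h2.
by rewrite -hq natrD addrK /dv oner_eq0 v1.
Qed.

Lemma p_neq0 : p%:R != 0 :> L.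
Proof. by case: p p_gt0 => // n _; apply: hchar. Qed.

Lemma vpn (n : nat) : v (p%:R ^+ n) = n%:Z.
Proof. by rewrite vX ?p_neq0 // hvp mulr1. Qed.

Lemma dvMl a b (x y : L) : x != 0 -> v x = a -> dv b y -> dv (a + b) (x * y).
Proof. by move=> hx <- h; apply: dvM => //; apply: dvI. Qed.

Lemma dv_exact (x : L) : x != 0 -> dv (v x) x.
Proof. by move=> _; apply: dvI. Qed.

Variable Qp : {pred L}.
Hypothesis hsub : is_subfield Qp.
Hypothesis hres : forall x, x \in Qp -> x != 0 -> 0 <= v x -> exists n : nat, vclose v 1 x n%:R.

Lemma Q0 : 0 \in Qp. Proof. by case: hsub => [[]]. Qed.
Lemma Q1 : 1 \in Qp. Proof. by case: hsub => [[]]. Qed.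
Lemma QD (x y : L) : x \in Qp -> y \in Qp -> x + y \in Qp. Proof. by case: hsub => _ h _ _ _; apply: h. Qed.
Lemma QN (x : L) : x \in Qp -> - x \in Qp. Proof. by case: hsub => _ _ h _ _; apply: h. Qed.
Lemma QM (x y : L) : x \in Qp -> y \in Qp -> x * y \in Qp. Proof. by case: hsub => _ _ _ h _; apply: h. Qed.
Lemma QV (x : L) : x \in Qp -> x^-1 \in Qp. Proof. by case: hsub => _ _ _ _ h; apply: h. Qed.
Lemma QB (x y : L) : x \in Qp -> y \in Qp -> x - y \in Qp. Proof. by move=> *; apply: QD => //; apply: QN. Qed.
Lemma Qdiv (x y : L) : x \in Qp -> y \in Qp -> x / y \in Qp. Proof. by move=> *; apply: QM => //; apply: QV. Qed.
Lemma Qnat n : n%:R \in Qp.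
Proof. elim: n => [|n IH]; first exact: Q0. by rewrite -addn1 natrD; apply: QD => //; apply: Q1. Qed.
Lemma QX (x : L) n : x \in Qp -> x ^+ n \in Qp.
Proof. move=> hx; elim: n => [|n IH]; first by rewrite expr0 Q1. by rewrite exprS QM. Qed.

Lemma exists_pow (e : int) : exists pi : L, [/\ pi \in Qp, pi != 0 & v pi = e].
Proof.
case: e => n.
  exists (p%:R ^+ n); split; [by apply: QX; apply: Qnat | by rewrite expf_neq0 // p_neq0 | by rewrite vpn].
exists (p%:R ^+ n.+1)^-1; split.
- by apply: QV; apply: QX; apply: Qnat.
- by rewrite invr_eq0 expf_neq0 // p_neq0.
- by rewrite vV ?expf_neq0 ?p_neq0 // vpn NegzE.
Qed.

Lemma resid (j : nat) : forall z : L, z \in Qp -> dv 0 z ->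
  exists2 N : nat, (N < p ^ j)%N & dv j%:Z (z - N%:R).
Proof.
elim: j => [|j IH] z hz hz0.
  by exists 0%N; rewrite ?expn0 // subr0.
have [->|zn0] := eqVneq z 0.
  by exists 0%N; [rewrite expn_gt0 p_gt0 | rewrite subr0 dv0].
have [n hn] := hres hz zn0 (dvP hz0 zn0).
move/vcloseE: hn => hn.
set r := (n %% p)%N.
have e1 : z - r%:R = (z - n%:R) + (n %/ p * p)%:R.
  have hn' : (n%:R : L) = (n %/ p * p)%:R + r%:R by rewrite -natrD /r -divn_eq.
  rewrite hn'; ring.
have hzr : dv 1 (z - r%:R) by rewrite e1; apply: dvD => //; rewrite mulnC dv_pn.
set z' := (z - r%:R) / p%:R.
have hz' : z' \in Qp by apply: Qdiv; [apply: QB => //; apply: Qnat | apply: Qnat].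
have hz'0 : dv 0 z'.
  have := dvM hzr (dvI (x := p%:R^-1) (m := -1) _); rewrite addrN; apply.
  by rewrite vV ?p_neq0 // hvp.
have [N' hN' hdv] := IH z' hz' hz'0.
exists (r + p * N')%N.
  rewrite expnS.
  have : (r < p)%N by rewrite ltn_pmod // p_gt0.
  nia.
have e2 : z - (r + p * N')%:R = p%:R * (z' - N'%:R).
  rewrite /z' mulrBr mulrCA mulfV ?p_neq0 // mulr1 natrD natrM opprD addrA; done.
rewrite e2 -[_.+1%:Z]/(1 + j%:Z); apply: dvM => //; exact: dv_p.
Qed.

Lemma ph (c : L) (e : int) (J : nat) (w : nat -> L) :
  c \in Qp ->
  (forall m, (m < p ^ J)%N -> w m \in Qp /\ dv e (w m - c)) ->
  (forall m m', (m < p ^ J)%N -> (m' < p ^ J)%N -> m <> m' -> ~~ dv (e + J%:Z) (w m - w m')) ->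
  forall z, z \in Qp -> dv e (z - c) -> exists2 m, (m < p ^ J)%N & dv (e + J%:Z) (w m - z).
Proof.
move=> hc hw hinj z hz hzc.
have [pi [hpi pi0 vpi]] := exists_pow e.
have hdig : forall q, q \in Qp -> dv e (q - c) ->
    exists2 N : nat, (N < p ^ J)%N & dv (e + J%:Z) (q - c - N%:R * pi).
  move=> q hq hqc.
  have hq' : (q - c) / pi \in Qp by apply: Qdiv => //; apply: QB.
  have hq0 : dv 0 ((q - c) / pi).
    have := dvM hqc (dvI (x := pi^-1) (m := - e) _); rewrite addrN; apply.
    by rewrite vV // vpi.
  have [N hN hd] := resid J hq' hq0.
  exists N => //.
  have -> : q - c - N%:R * pi = pi * ((q - c) / pi - N%:R) by field.
  by apply: dvM => //; apply: dvI; rewrite vpi.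
set P := (p ^ J)%N.
have P0 : (0 < P)%N by rewrite expn_gt0 p_gt0.
pose o0 := Ordinal P0.
pose good (m N : 'I_P) := dv (e + J%:Z) (w m - c - (N : nat)%:R * pi).
pose phi (m : 'I_P) := odflt o0 [pick N | good m N].
have phiP : forall m : 'I_P, good m (phi m).
  move=> m; rewrite /phi; case: pickP => [N //|hnone].
  have [hwm hwc] := hw m (ltn_ord m).
  have [N hN hd] := hdig _ hwm hwc.
  by move: (hnone (Ordinal hN)); rewrite /good /= hd.
have phi_inj : injective phi.
  move=> m m' he; case: (eqVneq (m : nat) m') => [/val_inj //| hne].
  exfalso.
  have H := hinj m m' (ltn_ord m) (ltn_ord m') (elimN eqP hne).
  move/negP: H; apply.
  have -> : w m - w m' = (w m - c - (phi m : nat)%:R * pi) - (w m' - c - (phi m' : nat)%:R * pi)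
    by rewrite he; ring.
  by apply: dvB; apply: phiP.
have [g phiK gK] := injF_bij phi_inj.
have [Nz hNz hdz] := hdig z hz hzc.
exists (g (Ordinal hNz)) => //.
have e3 := gK (Ordinal hNz).
have h1 := phiP (g (Ordinal hNz)); rewrite /good e3 /= in h1.
have -> : w (g (Ordinal hNz)) - z =
   (w (g (Ordinal hNz)) - c - Nz%:R * pi) - (z - c - Nz%:R * pi) by ring.
by apply: dvB.
Qed.

Lemma dv0z (z : L) (e : int) : 0 <= e -> dv e (z - 1) -> dv 0 z.
Proof.
move=> he hz; have -> : z = (z - 1) + 1 by rewrite subrK.
by apply: dvD; [apply: dv_le hz | apply: dv1].
Qed.

Lemma dvX1 (z : L) (e : int) : 0 <= e -> dv e (z - 1) -> forall n, dv e (z ^+ n - 1).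
Proof.
move=> he hz; elim=> [|n IH]; first by rewrite expr0 subrr dv0.
have -> : z ^+ n.+1 - 1 = z * (z ^+ n - 1) + (z - 1) by rewrite exprS; ring.
apply: dvD => //; rewrite -(add0r e); apply: dvM => //; exact: dv0z hz.
Qed.

Lemma geo_sum (z : L) (e : int) n : 0 <= e -> dv e (z - 1) ->
  dv e (\sum_(i < n) z ^+ i - n%:R).
Proof.
move=> he hz.
have -> : \sum_(i < n) z ^+ i - n%:R = \sum_(i < n) (z ^+ i - 1).
  by rewrite sumrB sumr_const card_ord.
apply: (big_ind (dv e)); [exact: dv0 | exact: dvD | move=> i _; exact: dvX1].
Qed.

Lemma vcop (z : L) (e : int) (b : nat) : 1 <= e -> z != 1 -> v (z - 1) = e ->
  ~~ (p %| b)%N -> z ^+ b != 1 /\ v (z ^+ b - 1) = e.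
Proof.
move=> he hz1 hv hb.
have [b0 vb] := v_coprime hb.
set S := \sum_(i < b) z ^+ i.
have hz : dv e (z - 1) by apply: dvI; rewrite hv.
have hS : dv 1 (S - b%:R) by apply: dv_le (he) _; apply: geo_sum hz; lia.
have [S0 vS] : S != 0 /\ v S = 0.
  have := vD_lt b0 (y := S - b%:R); rewrite vb add0r (addrC b%:R) subrK; apply; exact: hS.
have z10 : z - 1 != 0 by rewrite subr_eq0.
have e1 : z ^+ b - 1 = (z - 1) * S by rewrite subrX1.
have hne : z ^+ b - 1 != 0 by rewrite e1 mulf_neq0.
split; first by rewrite -subr_eq0.
by rewrite e1 vM // vS hv addr0.
Qed.

Lemma vpow_p (z : L) (e : int) : 1 <= e -> z != 1 -> v (z - 1) = e ->
  z ^+ p != 1 /\ v (z ^+ p - 1) = e + 1.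
Proof.
move=> he hz1 hv.
have hz : dv e (z - 1) by apply: dvI; rewrite hv.
set S := \sum_(i < p) z ^+ i.
have eS : S - p%:R = (z - 1) * \sum_(i < p) \sum_(j < i) z ^+ j.
  have hp : (p%:R : L) = \sum_(i < p) 1 by rewrite sumr_const card_ord.
  rewrite /S hp -sumrB mulr_sumr; apply: eq_bigr => i _; exact: subrX1.
have hT : dv 1 (\sum_(i < p) \sum_(j < i) z ^+ j).
  have -> : \sum_(i < p) \sum_(j < i) z ^+ j =
     \sum_(i < p) (\sum_(j < i) z ^+ j - (i : nat)%:R) + (\sum_(i < p) (i : nat))%:R.
    by rewrite natr_sum -big_split /=; apply: eq_bigr => i _; rewrite subrK.
  apply: dvD.
    apply: (big_ind (dv 1)); [exact: dv0 | exact: dvD | move=> i _].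
    by apply: dv_le (he) _; apply: geo_sum hz; lia.
  have : (p %| \sum_(i < p) (i : nat))%N.
    have eb := bin2_sum p; rewrite big_mkord in eb; rewrite eb.
    by apply: prime_dvd_bin => //; rewrite p2.
  by case/dvdnP => q ->; rewrite mulnC; exact: dv_pn.
have hSp : dv (1 + 1) (S - p%:R).
  by rewrite eS; apply: dv_le (_ : 1 + 1 <= e + 1) (dvM hz hT); lia.
have [S0 vS] : S != 0 /\ v S = 1.
  have := vD_lt p_neq0 (y := S - p%:R); rewrite hvp (addrC p%:R) subrK; apply; exact: hSp.
have z10 : z - 1 != 0 by rewrite subr_eq0.
have e1 : z ^+ p - 1 = (z - 1) * S by rewrite subrX1.
have hne : z ^+ p - 1 != 0 by rewrite e1 mulf_neq0.
split; first by rewrite -subr_eq0.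
by rewrite e1 vM // vS hv.
Qed.

Lemma vexact (w : L) (e : int) (N : nat) : 1 <= e -> w != 1 -> v (w - 1) = e -> (0 < N)%N ->
  w ^+ N != 1 /\ v (w ^+ N - 1) = e + (logn p N)%:Z.
Proof.
move=> he hw hv hN.
have hpow : forall a : nat, w ^+ (p ^ a) != 1 /\ v (w ^+ (p ^ a) - 1) = e + a%:Z.
  elim=> [|a [IH1 IH2]]; first by rewrite expn0 expr1 hv addr0.
  have ha : 1 <= e + a%:Z by lia.
  rewrite expnSr exprM; have [h1 h2] := vpow_p ha IH1 IH2.
  by split => //; rewrite h2; lia.
have [b hb eN] := pfactor_coprime pprime hN.
have [h1 h2] := hpow (logn p N).
have hb' : ~~ (p %| b)%N by rewrite -prime_coprime.
have ha : 1 <= e + (logn p N)%:Z by lia.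
have [h3 h4] := vcop ha h1 h2 hb'.
by rewrite {1 2}eN mulnC exprM; split.
Qed.

Lemma vsmall (w : L) (e : int) (N J : nat) : 1 <= e -> w != 1 -> v (w - 1) = e ->
  (0 < N)%N -> (N < p ^ J)%N -> ~~ dv (e + J%:Z) (w ^+ N - 1).
Proof.
move=> he hw hv hN hNJ.
have [h1 h2] := vexact he hw hv hN.
have hlog : (logn p N < J)%N.
  have [b hb eN] := pfactor_coprime pprime hN.
  have b0 : (0 < b)%N.
    case: b hb eN => // ; rewrite /coprime gcdn0 => /eqP hp1.
    by move: pprime; rewrite hp1.
  rewrite -(ltn_exp2l _ _ (prime_gt1 pprime)); apply: leq_ltn_trans hNJ.
  by rewrite {2}eN leq_pmull.
rewrite /dv negb_or subr_eq0 h1 /= -ltNge h2; lia.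
Qed.

Variables (a : nat -> L) (r s c1 c2 lam1 lam2 : L) (l : nat) (k : int).
Hypothesis haQ : forall n, a n \in Qp.
Hypothesis hrQ : r \in Qp.
Hypothesis hrec : forall n : nat, a n.+2 = r * a n.+1 + s * a n.
Hypothesis ha : forall n : nat, a n = c1 * lam1 ^+ n + c2 * lam2 ^+ n.
Hypotheses (c10 : c1 != 0) (c20 : c2 != 0) (l10 : lam1 != 0) (l20 : lam2 != 0).
Hypothesis hv12 : v lam1 = v lam2.
Hypothesis hroot : forall n : nat, (0 < n)%N -> (lam2 / lam1) ^+ n != 1.
Hypothesis hord : order_modp v (lam2 / lam1) l.
Hypothesis hk : k = v ((lam2 / lam1) ^+ l - 1).

Local Notation u := (lam2 / lam1).
Local Notation y := (- (c1 / c2)).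
Local Notation F x := (lam1 * (u * x - y) / (x - y)).
Local Notation al := ((lam1 + lam2) / 2%:R).
Local Notation G x := (2%:R * (x - y) / ((lam2 - lam1) * (x + y))).
Local Notation vd := (v (lam2 - lam1)).

Lemma u0 : u != 0. Proof. by rewrite mulf_neq0 ?invr_eq0. Qed.
Lemma vu : v u = 0. Proof. by rewrite vdiv // hv12 subrr. Qed.
Lemma uX0 n : u ^+ n != 0. Proof. by rewrite expf_neq0 // u0. Qed.
Lemma vuX n : v (u ^+ n) = 0. Proof. by rewrite vX ?u0 // vu mulr0. Qed.
Lemma y0 : y != 0. Proof. by rewrite oppr_eq0 mulf_neq0 ?invr_eq0. Qed.

Lemma aE n : a n = c2 * lam1 ^+ n * (u ^+ n - y).
Proof.
rewrite ha exprMn exprVn; have := expf_neq0 n l10 => h1.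
by field; rewrite c20 h1.
Qed.

Lemma anz n : u ^+ n != y -> a n != 0.
Proof. by move=> h1; rewrite aE !mulf_neq0 ?expf_neq0 // subr_eq0. Qed.

Lemma ratioE n : u ^+ n != y -> a n.+1 / a n = F (u ^+ n).
Proof.
move=> h1; rewrite !aE; have := expf_neq0 n l10 => h2.
have h3 : u ^+ n - y != 0 by rewrite subr_eq0.
have h4 : u ^+ n * c2 - - c1 != 0.
  have -> : u ^+ n * c2 - - c1 = c2 * (u ^+ n - y) by field.
  by rewrite mulf_neq0.
by rewrite !exprS; field; rewrite c20 h4 l10 h2.
Qed.

Lemma dv_cancel (x z : L) m : x != 0 -> v x = 0 -> dv m (x * z) -> dv m z.
Proof.
move=> hx vx hd; have -> : z = x^-1 * (x * z) by rewrite mulKf.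
rewrite -(add0r m); apply: dvM => //; apply: dvI; by rewrite vV // vx oppr0.
Qed.

Lemma l12 : lam2 - lam1 != 0.
Proof.
have := hroot (ltn0Sn 0); rewrite expr1; apply: contraNneq => h.
by rewrite (subr0_eq h) divff.
Qed.

Lemma rE : r = lam1 + lam2.
Proof.
set P1 := lam1 ^+ 2 - r * lam1 - s; set P2 := lam2 ^+ 2 - r * lam2 - s.
have E0 : c1 * P1 + c2 * P2 = 0.
  have -> : c1 * P1 + c2 * P2 = a 2 - (r * a 1 + s * a 0) by rewrite !ha /P1 /P2; ring.
  by rewrite (hrec 0) subrr.
have E1 : c1 * lam1 * P1 + c2 * lam2 * P2 = 0.
  have -> : c1 * lam1 * P1 + c2 * lam2 * P2 = a 3 - (r * a 2 + s * a 1) by rewrite !ha /P1 /P2; ring.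
  by rewrite (hrec 1) subrr.
have hP1 : P1 = 0.
  have : c1 * P1 * (lam2 - lam1) = 0.
    have -> : c1 * P1 * (lam2 - lam1) = lam2 * (c1 * P1 + c2 * P2) - (c1 * lam1 * P1 + c2 * lam2 * P2) by ring.
    by rewrite E0 E1 mulr0 subrr.
  move/eqP; rewrite !mulf_eq0 (negbTE c10) (negbTE l12) /= orbF; by move/eqP.
have hP2 : P2 = 0.
  by move: E0; rewrite hP1 mulr0 add0r => /eqP; rewrite mulf_eq0 (negbTE c20) /= => /eqP.
have : (lam2 - lam1) * (lam1 + lam2 - r) = 0.
  have -> : (lam2 - lam1) * (lam1 + lam2 - r) = P2 - P1 by rewrite /P1 /P2; ring.
  by rewrite hP1 hP2 subrr.
move/eqP; rewrite mulf_eq0 (negbTE l12) /= subr_eq0 => /eqP; done.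
Qed.

Lemma two0 : (2%:R : L) != 0 /\ v 2%:R = 0.
Proof.
apply: v_coprime; apply/negP => h; have := dvdn_leq (isT : (0 < 2)%N) h; lia.
Qed.

Lemma alQ : al \in Qp.
Proof. by rewrite -rE; apply: Qdiv => //; apply: Qnat. Qed.

Lemma l_ge1 : (1 <= l)%N. Proof. by case: hord. Qed.
Lemma w1 : u ^+ l != 1. Proof. exact: hroot l_ge1. Qed.
Lemma vw : v (u ^+ l - 1) = k. Proof. by rewrite hk. Qed.
Lemma k_ge1 : 1 <= k.
Proof.
case: hord => _ /vcloseE h _; rewrite hk; apply: dvP h _.
by rewrite subr_eq0 w1.
Qed.

Lemma hu n : dv 0 (u ^+ n). Proof. by apply: dvI; rewrite vuX. Qed.

Lemma ord_small j : (0 < j)%N -> (j < l)%N -> u ^+ j - 1 != 0 /\ v (u ^+ j - 1) = 0.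
Proof.
move=> hj hjl; case: hord => _ _ H.
have hn : ~~ dv 1 (u ^+ j - 1) by apply/negP => hd; apply: (H j hj hjl); apply/vcloseE.
move: hn; rewrite /dv negb_or => /andP [h0 hlt]; rewrite -ltNge in hlt.
have hge : 0 <= v (u ^+ j - 1) := dvP (dvB (hu j) dv1) h0.
have hlt' : v (u ^+ j - 1) < 1 := hlt.
split => //; lia.
Qed.

Lemma uclass i m : u ^+ (i + l * m) = u ^+ i * (u ^+ l) ^+ m.
Proof. by rewrite exprD exprM. Qed.

Lemma dv_class i m : dv k (u ^+ (i + l * m) - u ^+ i).
Proof.
rewrite uclass.
have -> : u ^+ i * (u ^+ l) ^+ m - u ^+ i = u ^+ i * ((u ^+ l) ^+ m - 1) by ring.
rewrite -(add0r k); apply: dvM; first exact: hu.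
apply: dvX1; [have := k_ge1; lia | by apply: dvI; rewrite vw].
Qed.

Lemma divE n : n = (n %% l + l * (n %/ l))%N.
Proof. by rewrite addnC mulnC -divn_eq. Qed.

Lemma dv_mod n : dv k (u ^+ n - u ^+ (n %% l)).
Proof. by rewrite {1}(divE n); apply: dv_class. Qed.

Lemma class_dist_lt i m m' J : (m < p ^ J)%N -> (m' < m)%N ->
  ~~ dv (k + J%:Z) (u ^+ (i + l * m) - u ^+ (i + l * m')).
Proof.
move=> hm lt; rewrite !uclass.
have -> : u ^+ i * (u ^+ l) ^+ m - u ^+ i * (u ^+ l) ^+ m' =
    (u ^+ i * (u ^+ l) ^+ m') * ((u ^+ l) ^+ (m - m') - 1).
  by rewrite -{1}(subnKC (ltnW lt)) exprD; ring.
apply/negP => hd.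
have hx0 : u ^+ i * (u ^+ l) ^+ m' != 0 by rewrite -exprM -exprD uX0.
have vx : v (u ^+ i * (u ^+ l) ^+ m') = 0 by rewrite -exprM -exprD vuX.
have := dv_cancel hx0 vx hd; apply/negP.
apply: vsmall k_ge1 w1 vw _ _; first by rewrite subn_gt0.
by apply: leq_ltn_trans hm; apply: leq_subr.
Qed.

Lemma class_dist i m m' J : (m < p ^ J)%N -> (m' < p ^ J)%N -> m <> m' ->
  ~~ dv (k + J%:Z) (u ^+ (i + l * m) - u ^+ (i + l * m')).
Proof.
move=> hm hm' hne; case: (ltngtP m m') => [lt|lt|eq]; last by [].
  rewrite -opprB; apply/negP => /dvN; rewrite opprK; apply/negP.
  exact: class_dist_lt.
exact: class_dist_lt.
Qed.

Lemma uu0_lt i j : (i < j)%N -> (j < l)%N -> u ^+ i - u ^+ j != 0 /\ v (u ^+ i - u ^+ j) = 0.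
Proof.
move=> hij hjl.
have hj0 : (0 < j - i)%N by rewrite subn_gt0.
have [h1 h2] := ord_small hj0 (leq_ltn_trans (leq_subr _ _) hjl).
have -> : u ^+ i - u ^+ j = - u ^+ i * (u ^+ (j - i) - 1).
  by rewrite -{1}(subnKC (ltnW hij)) exprD; ring.
rewrite mulf_neq0 ?oppr_eq0 ?uX0 //; split => //.
by rewrite vM ?oppr_eq0 ?uX0 // vN vuX h2.
Qed.

Lemma uu0 i j : (i < l)%N -> (j < l)%N -> i <> j -> u ^+ i - u ^+ j != 0 /\ v (u ^+ i - u ^+ j) = 0.
Proof.
move=> hi hj hne; case: (ltngtP i j) => [lt|lt|eq]; last by [].
  exact: uu0_lt.
by rewrite -opprB oppr_eq0 vN; apply: uu0_lt.
Qed.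


Lemma xc2 (x : L) : x != y -> x * c2 - - c1 != 0.
Proof.
move=> hx; have -> : x * c2 - - c1 = c2 * (x - y) by field; rewrite c20.
by rewrite mulf_neq0 // subr_eq0.
Qed.

Lemma FD (x x' : L) : x != y -> x' != y ->
  F x - F x' = (lam1 - lam2) * y * (x - x') / ((x - y) * (x' - y)).
Proof.
move=> hx hx'.
by field; rewrite c20 (xc2 hx) (xc2 hx') l10.
Qed.

Lemma Fal (x : L) : x != y -> F x - al = (lam2 - lam1) * (x + y) / (2%:R * (x - y)).
Proof.
move=> hx; have [t0 _] := two0.
by field; rewrite c20 (xc2 hx) t0 l10.
Qed.

Lemma xc2' (x : L) : x + y != 0 -> x * c2 - c1 != 0.
Proof.
move=> hx; have -> : x * c2 - c1 = c2 * (x + y) by field; rewrite c20.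
by rewrite mulf_neq0.
Qed.

Lemma GD (x x' : L) : x + y != 0 -> x' + y != 0 ->
  G x - G x' = 4%:R * y * (x - x') / ((lam2 - lam1) * (x + y) * (x' + y)).
Proof.
move=> hx hx'; have l0 := l12.
by field; rewrite c20 (xc2' hx) (xc2' hx') l0.
Qed.

Lemma FG (x : L) : x != y -> x + y != 0 -> F x = al + (G x)^-1.
Proof.
move=> hx hxy; have l0 := l12; have [t0 _] := two0.
by field; rewrite c20 (xc2' hxy) l0 (xc2 hx) t0 l10.
Qed.

Lemma dvxy i n : dv k (u ^+ i - y) -> dv k (u ^+ (i + l * n) - y).
Proof.
move=> hi; have -> : u ^+ (i + l * n) - y = (u ^+ (i + l * n) - u ^+ i) + (u ^+ i - y) by ring.
by apply: dvD => //; apply: dv_class.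
Qed.

Lemma vy0 i : dv k (u ^+ i - y) -> v y = 0.
Proof.
move=> hi; have e : y = u ^+ i + - (u ^+ i - y) by ring.
have hd : dv (v (u ^+ i) + 1) (- (u ^+ i - y)).
  by rewrite vuX add0r; apply: dvN; apply: dv_le k_ge1 hi.
have [_ h2] := vD_lt (uX0 i) hd.
by rewrite e h2 vuX.
Qed.

Lemma v4 : (4%:R : L) != 0 /\ v 4%:R = 0.
Proof.
have [t0 t1] := two0.
have e : (4%:R : L) = 2%:R * 2%:R by rewrite -natrM.
by rewrite e mulf_neq0 // vM // t1.
Qed.

Lemma xplusy (x : L) : v y = 0 -> dv k (x - y) -> x + y != 0 /\ v (x + y) = 0.
Proof.
move=> vy hx; have [t0 t1] := two0.
have e : x + y = 2%:R * y + (x - y) by rewrite mulr2n mulrDl !mul1r; ring.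
have h2y : 2%:R * y != 0 by rewrite mulf_neq0 // y0.
have v2y : v (2%:R * y) = 0 by rewrite vM ?y0 // t1 vy addr0.
have hd : dv (v (2%:R * y) + 1) (x - y) by rewrite v2y add0r; apply: dv_le k_ge1 hx.
have [h1 h2] := vD_lt h2y hd.
by rewrite e h1 h2 v2y.
Qed.

Lemma GQ n : u ^+ n + y != 0 -> G (u ^+ n) \in Qp.
Proof.
move=> hxy; have [->|hne] := eqVneq (u ^+ n) y.
  by rewrite subrr mulr0 mul0r Q0.
have e := FG hne hxy.
have -> : G (u ^+ n) = (F (u ^+ n) - al)^-1 by rewrite e (addrC al) addrK invrK.
by apply: QV; apply: QB; [rewrite -ratioE //; apply: Qdiv | exact: alQ].
Qed.

Lemma approxC i : dv k (u ^+ i - y) -> forall z, z \in Qp -> dv (k - vd) z -> forall J : nat,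
  exists m, dv (k - vd + J%:Z) (G (u ^+ (i + l * m)) - z).
Proof.
move=> hi z hz hzd J.
have vy := vy0 hi.
have hx : forall m, u ^+ (i + l * m) + y != 0 /\ v (u ^+ (i + l * m) + y) = 0.
  by move=> m; apply: xplusy vy (dvxy m hi).
have [t0 t1] := two0; have [f0 f1] := v4; have d0 := l12.
have hG : forall m, dv (k - vd) (G (u ^+ (i + l * m))).
  move=> m; have [s0 s1] := hx m.
  have -> : G (u ^+ (i + l * m)) =
     (2%:R / ((lam2 - lam1) * (u ^+ (i + l * m) + y))) * (u ^+ (i + l * m) - y) by ring.
  have hfac0 : 2%:R / ((lam2 - lam1) * (u ^+ (i + l * m) + y)) != 0.
    by rewrite mulf_neq0 ?invr_eq0 ?mulf_neq0.
  have vfac : v (2%:R / ((lam2 - lam1) * (u ^+ (i + l * m) + y))) = - vd.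
    by rewrite vdiv ?mulf_neq0 // vM // t1 s1 addr0 sub0r.
  by have := dvMl hfac0 vfac (dvxy m hi); rewrite addrC.
have P1 : forall m, (m < p ^ J)%N -> G (u ^+ (i + l * m)) \in Qp /\ dv (k - vd) (G (u ^+ (i + l * m)) - 0).
  by move=> m' _; rewrite subr0; split; [apply: GQ; exact: (hx m').1 | apply: hG].
have P2 : forall m1 m2, (m1 < p ^ J)%N -> (m2 < p ^ J)%N -> m1 <> m2 ->
    ~~ dv (k - vd + J%:Z) (G (u ^+ (i + l * m1)) - G (u ^+ (i + l * m2))).
  move=> m1 m2 h1 h2 hne; apply/negP => hd.
  have [a0 av] := hx m1; have [b0 bv] := hx m2.
  set x1 := u ^+ (i + l * m1) in a0 av hd *; set x2 := u ^+ (i + l * m2) in b0 bv hd *.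
  have fac0 : (lam2 - lam1) * (x1 + y) * (x2 + y) / (4%:R * y) != 0.
    by rewrite !mulf_neq0 ?invr_eq0 ?mulf_neq0 ?y0.
  have vfac : v ((lam2 - lam1) * (x1 + y) * (x2 + y) / (4%:R * y)) = vd.
    rewrite vdiv ?mulf_neq0 ?y0 // !vM ?mulf_neq0 ?y0 // av bv f1 vy. by rewrite !addr0.
  have eq : x1 - x2 = (lam2 - lam1) * (x1 + y) * (x2 + y) / (4%:R * y) * (G x1 - G x2).
    by rewrite GD //; field; rewrite c20 (xc2' a0) (xc2' b0) d0 oppr_eq0 c10 f0.
  have := dvMl fac0 vfac hd; rewrite -eq => hd2.
  have hd3 : dv (k + J%:Z) (x1 - x2) by move: hd2; have -> : vd + (k - vd + J%:Z) = k + J%:Z by ring.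
  by move: hd3; apply/negP; apply: class_dist.
have [m _ hm] := ph Q0 P1 P2 hz (etrans (congr1 _ (subr0 _)) hzd).
by exists m.
Qed.

Lemma vd' : v (lam1 - lam2) = vd. Proof. by rewrite -opprB vN. Qed.
Lemma l12' : lam1 - lam2 != 0. Proof. by rewrite -opprB oppr_eq0 l12. Qed.

Lemma FQ n : u ^+ n != y -> F (u ^+ n) \in Qp.
Proof. by move=> hn; rewrite -ratioE //; apply: Qdiv. Qed.

Lemma approxB i (A : int) : (forall m, u ^+ (i + l * m) != y /\ v (u ^+ (i + l * m) - y) = A) ->
  forall z, z \in Qp -> dv (vd + v y + k - (A + A)) (z - F (u ^+ i)) -> forall J : nat,
  exists m, dv (vd + v y + k - (A + A) + J%:Z) (F (u ^+ (i + l * m)) - z).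
Proof.
move=> hx z hz hzc J.
have d0 := l12'; have dv0 := vd'.
have ei : u ^+ i = u ^+ (i + l * 0) by rewrite muln0 addn0.
have P1 : forall m, (m < p ^ J)%N -> F (u ^+ (i + l * m)) \in Qp /\
     dv (vd + v y + k - (A + A)) (F (u ^+ (i + l * m)) - F (u ^+ (i + l * 0))).
  move=> m _; split; first by apply: FQ; exact: (hx m).1.
  have [a0 av] := hx m; have [b0 bv] := hx 0%N.
  have a0' : u ^+ (i + l * m) - y != 0 by rewrite subr_eq0.
  have b0' : u ^+ (i + l * 0) - y != 0 by rewrite subr_eq0.
  rewrite FD //.
  set x1 := u ^+ (i + l * m) in a0 av a0' *; set x2 := u ^+ (i + l * 0) in b0 bv b0' *.
  have fac0 : (lam1 - lam2) * y / ((x1 - y) * (x2 - y)) != 0.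
    by rewrite !mulf_neq0 ?invr_eq0 ?mulf_neq0 ?y0.
  have vfac : v ((lam1 - lam2) * y / ((x1 - y) * (x2 - y))) = vd + v y - (A + A).
    by rewrite vdiv ?mulf_neq0 ?y0 // !vM ?y0 // av bv dv0.
  have hdx : dv k (x1 - x2) by rewrite /x2 muln0 addn0; apply: dv_class.
  have := dvMl fac0 vfac hdx.
  have -> : (lam1 - lam2) * y * (x1 - x2) / ((x1 - y) * (x2 - y)) =
     (lam1 - lam2) * y / ((x1 - y) * (x2 - y)) * (x1 - x2) by ring.
  by have -> : vd + v y - (A + A) + k = vd + v y + k - (A + A) by ring.
have P2 : forall m1 m2, (m1 < p ^ J)%N -> (m2 < p ^ J)%N -> m1 <> m2 ->
    ~~ dv (vd + v y + k - (A + A) + J%:Z) (F (u ^+ (i + l * m1)) - F (u ^+ (i + l * m2))).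
  move=> m1 m2 h1 h2 hne; apply/negP => hd.
  have [a0 av] := hx m1; have [b0 bv] := hx m2.
  have a0' : u ^+ (i + l * m1) - y != 0 by rewrite subr_eq0.
  have b0' : u ^+ (i + l * m2) - y != 0 by rewrite subr_eq0.
  rewrite FD // in hd.
  set x1 := u ^+ (i + l * m1) in a0 av a0' hd *; set x2 := u ^+ (i + l * m2) in b0 bv b0' hd *.
  have fac0 : (x1 - y) * (x2 - y) / ((lam1 - lam2) * y) != 0.
    by rewrite !mulf_neq0 ?invr_eq0 ?mulf_neq0 ?y0.
  have vfac : v ((x1 - y) * (x2 - y) / ((lam1 - lam2) * y)) = A + A - (vd + v y).
    by rewrite vdiv ?mulf_neq0 ?y0 // !vM ?y0 // av bv dv0.
  have eq : x1 - x2 = (x1 - y) * (x2 - y) / ((lam1 - lam2) * y) *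
      ((lam1 - lam2) * y * (x1 - x2) / ((x1 - y) * (x2 - y))).
    by field; rewrite c20 (xc2 a0) (xc2 b0) oppr_eq0 c10 d0.
  have := dvMl fac0 vfac hd; rewrite -eq.
  have -> : A + A - (vd + v y) + (vd + v y + k - (A + A) + J%:Z) = k + J%:Z by ring.
  by apply/negP; apply: class_dist.
have hc : F (u ^+ (i + l * 0)) \in Qp by apply: FQ; exact: (hx 0%N).1.
have hzc' : dv (vd + v y + k - (A + A)) (z - F (u ^+ (i + l * 0))) by rewrite -ei.
have [m _ hm] := ph hc P1 P2 hz hzc'.
by exists m.
Qed.

Lemma absz_ge (M e : int) : M <= e + (`|M - e|%N)%:Z.
Proof. have := ler_norm (M - e); rewrite -abszE; lia. Qed.

Lemma Kintro z : z \in Qp -> (forall M : int, exists n, u ^+ n != y /\ dv M (F (u ^+ n) - z)) ->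
  kepler_set v Qp a z.
Proof.
move=> hz H; split=> // M; have [n [hn hd]] := H M.
exists (F (u ^+ n)); split; last by apply/vcloseE.
by exists n; split; [apply: anz | rewrite ratioE].
Qed.

Lemma KB i (A : int) : (forall m, u ^+ (i + l * m) != y /\ v (u ^+ (i + l * m) - y) = A) ->
  forall z, z \in Qp -> dv (vd + v y + k - (A + A)) (z - F (u ^+ i)) -> kepler_set v Qp a z.
Proof.
move=> hx z hz hzc; apply: Kintro => // M.
set e := vd + v y + k - (A + A).
have [m hm] := approxB hx hz hzc `|M - e|%N.
exists (i + l * m)%N; split; first exact: (hx m).1.
by apply: dv_le hm; apply: absz_ge.
Qed.

Lemma KC i : dv k (u ^+ i - y) -> forall R, R \in Qp -> R != al -> v (R - al) <= vd - k ->
  kepler_set v Qp a R.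
Proof.
move=> hi R hR hRa hv.
have Ra0 : R - al != 0 by rewrite subr_eq0.
set z := (R - al)^-1.
have z0 : z != 0 by rewrite invr_eq0.
have vz : v z = - v (R - al) by rewrite vV.
have hzQ : z \in Qp by apply: QV; apply: QB => //; exact: alQ.
have hzd : dv (k - vd) z by apply: dvI; rewrite vz; move: hv; clear; lia.
have vy := vy0 hi.
apply: Kintro => // M.
set e := k - vd.
set J := (absz (M + (v z + v z) - e)%R + absz (v z + 1 - e)%R)%N.
have hJ1 : M + (v z + v z) <= e + J%:Z.
  have := absz_ge (M + (v z + v z)) e; rewrite /J PoszD; clear; lia.
have hJ2 : v z + 1 <= e + J%:Z.
  have := absz_ge (v z + 1) e; rewrite /J PoszD; clear; lia.
have [m hm] := approxC hi hzQ hzd J.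
set x := u ^+ (i + l * m) in hm *.
have [xy0 vxy] := xplusy vy (dvxy m hi).
have hG0 : G x != 0.
  apply/negP => /eqP hG; move: hm; rewrite hG sub0r => /dvN; rewrite opprK => hz'.
  have := dvP hz' z0; move: hJ2; clear; lia.
have hxy : x != y by apply: contraNneq hG0 => ->; rewrite subrr mulr0 mul0r.
exists (i + l * m)%N; split => //.
have [_ vG] : z + (G x - z) != 0 /\ v (z + (G x - z)) = v z.
  by apply: vD_lt => //; apply: dv_le hm.
rewrite addrC subrK in vG.
have eR : R = al + z^-1 by rewrite invrK addrC subrK.
have -> : F x - R = (G x * z)^-1 * (z - G x).
  by rewrite FG // eR; field; rewrite c20 (xc2' xy0) l12 z0 (xc2 hxy) two0.1.
have hGz : G x * z != 0 by rewrite mulf_neq0.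
have vGz : v ((G x * z)^-1) = - (v z + v z) by rewrite vV // vM // vG.
have := dvMl (invr_neq0 hGz) vGz (dvN hm); rewrite opprB.
apply: dv_le; move: hJ1; clear; lia.
Qed.

Lemma fin_bound (f : nat -> int) n : exists M, forall i, (i < n)%N -> f i <= M.
Proof.
elim: n => [|n [M hM]]; first by exists 0.
exists (Num.max M (f n)) => i; rewrite ltnS leq_eqVlt => /orP [/eqP -> | hi].
  by rewrite le_max lexx orbT.
by rewrite le_max hM.
Qed.

Lemma l_gt0 : (0 < l)%N. Proof. exact: l_ge1. Qed.

Lemma Fdiff (n n' : nat) : u ^+ n != y -> u ^+ n' != y ->
  F (u ^+ n) - F (u ^+ n') =
   ((lam1 - lam2) * y / ((u ^+ n - y) * (u ^+ n' - y))) * (u ^+ n - u ^+ n') /\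
  (lam1 - lam2) * y / ((u ^+ n - y) * (u ^+ n' - y)) != 0 /\
  v ((lam1 - lam2) * y / ((u ^+ n - y) * (u ^+ n' - y))) = vd + v y - (v (u ^+ n - y) + v (u ^+ n' - y)).
Proof.
move=> h1 h2.
have a0 : u ^+ n - y != 0 by rewrite subr_eq0.
have b0 : u ^+ n' - y != 0 by rewrite subr_eq0.
split; first by rewrite FD //; ring.
split; first by rewrite !mulf_neq0 ?invr_eq0 ?mulf_neq0 ?y0 ?l12'.
by rewrite vdiv ?mulf_neq0 ?y0 ?l12' // !vM ?y0 ?l12' // vd'.
Qed.

Lemma notLam_ny : ~ vclosure v (fun _ => True) (fun y0 => exists n : nat, y0 = u ^+ n) y ->
  forall n, u ^+ n != y.
Proof.
move=> nL n; apply/negP => /eqP e; apply: nL; split => // M.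
by exists (u ^+ n); split; [exists n | apply/vcloseE; rewrite e subrr dv0].
Qed.

Lemma notLam_ncl : ~ vclosure v (fun _ => True) (fun y0 => exists n : nat, y0 = u ^+ n) y ->
  forall i, ~~ dv k (u ^+ i - y).
Proof.
move=> nL i; apply/negP => hi; apply: nL; split => // M.
have vy := vy0 hi.
have [m hm] := approxC hi Q0 (dv0 (k - vd)) (absz (M - k)%R).
set x := u ^+ (i + l * m) in hm *.
have [xy0 vxy] := xplusy vy (dvxy m hi).
have [t0 t1] := two0.
exists x; split; first by exists (i + l * m)%N.
apply/vcloseE.
have fac0 : (lam2 - lam1) * (x + y) / 2%:R != 0 by rewrite !mulf_neq0 ?invr_eq0 ?l12.
have vfac : v ((lam2 - lam1) * (x + y) / 2%:R) = vd by rewrite vdiv ?mulf_neq0 ?l12 // vM ?l12 // vxy t1 !addr0.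
have := dvMl fac0 vfac hm; rewrite subr0.
have -> : (lam2 - lam1) * (x + y) / 2%:R * G x = x - y.
  by field; rewrite c20 (xc2' xy0) l12 t0.
apply: dv_le.
have := absz_ge M k; clear; lia.
Qed.

Lemma Arange i : u ^+ i != y ->
  [/\ v y < 0 -> v (u ^+ i - y) = v y, 0 < v y -> v (u ^+ i - y) = 0
    & v y = 0 -> 0 <= v (u ^+ i - y)].
Proof.
move=> hi; have hi' : u ^+ i - y != 0 by rewrite subr_eq0.
split.
- move=> hy.
  have hny : - y != 0 by rewrite oppr_eq0 y0.
  have hd : dv (v (- y) + 1) (u ^+ i) by apply: dvI; rewrite vN vuX; move: hy; clear; lia.
  have [_ h2] := vD_lt hny hd.
  by rewrite addrC h2 vN.
- move=> hy.
  have hd : dv (v (u ^+ i) + 1) (- y) by apply: dvI; rewrite vN vuX; move: hy; clear; lia.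
  have [_ h2] := vD_lt (uX0 i) hd.
  by rewrite h2 vuX.
- move=> hy; apply: (dvP _ hi'); apply: dvB; first exact: hu.
  by apply: dvI; rewrite hy.
Qed.

Lemma part1 : ~ vclosure v (fun _ => True) (fun y0 => exists n : nat, y0 = u ^+ n) y ->
  let B := fun i : nat => pball v Qp (a i.+1 / a i)
        (v (c1 / c2) + v (lam2 - lam1) - 2 * v (c1 / c2 + u ^+ i) + k) in
  (forall x, kepler_set v Qp a x <-> exists2 i : nat, (i < l)%N & B i x) /\
  (forall i j : nat, (i < l)%N -> (j < l)%N -> i <> j -> forall x, ~ (B i x /\ B j x)).
Proof.
move=> nL B.
have xny := notLam_ny nL.
have ncl := notLam_ncl nL.
have Acst : forall i m, v (u ^+ (i + l * m) - y) = v (u ^+ i - y).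
  move=> i m.
  have hi0 : u ^+ i - y != 0 by rewrite subr_eq0 xny.
  have hlt : v (u ^+ i - y) < k.
    have := ncl i; rewrite /dv negb_or hi0 /= -ltNge; done.
  have hd : dv (v (u ^+ i - y) + 1) (u ^+ (i + l * m) - u ^+ i).
    by apply: dv_le (dv_class i m); move: hlt; clear; lia.
  have [_ h2] := vD_lt hi0 hd.
  by move: h2; have -> : u ^+ i - y + (u ^+ (i + l * m) - u ^+ i) = u ^+ (i + l * m) - y by ring.
pose A i := v (u ^+ i - y).
pose e i := vd + v y + k - (A i + A i).
have eE : forall i, v (c1 / c2) + v (lam2 - lam1) - 2 * v (c1 / c2 + u ^+ i) + k = e i.
  move=> i; have -> : c1 / c2 + u ^+ i = u ^+ i - y by rewrite opprK addrC.
  rewrite -[v (c1 / c2)]vN /e /A; ring.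
have BE : forall i x, B i x <-> x \in Qp /\ dv (e i) (x - F (u ^+ i)).
  move=> i x; rewrite /B /pball eE ratioE //; split; case=> h1 h2; split => //; by apply/vcloseE.
split.
  move=> x; split.
    case=> hxQ hcl.
    have [Mb hMb] := fin_bound e l.
    have [y1 [[n [an0 ->]] hc]] := hcl Mb.
    have hn := xny n.
    set i := (n %% l)%N.
    have hil : (i < l)%N by rewrite ltn_pmod // l_gt0.
    exists i => //; apply/BE; split => //.
    have [eqF [f0 vf]] := Fdiff hn (xny i).
    have An : v (u ^+ n - y) = A i by rewrite /A {1}(divE n) Acst.
    have d1 : dv (e i) (F (u ^+ n) - F (u ^+ i)).
      rewrite eqF; have := dvMl f0 vf (dv_mod n); rewrite An /e.
      by have -> : vd + v y - (A i + A i) + k = vd + v y + k - (A i + A i) by ring.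
    have d2 : dv (e i) (x - F (u ^+ n)).
      move/vcloseE: hc; rewrite ratioE // => /dvN; rewrite opprB => hc.
      exact: dv_le (hMb i hil) hc.
    have -> : x - F (u ^+ i) = (x - F (u ^+ n)) + (F (u ^+ n) - F (u ^+ i)) by ring.
    exact: dvD.
  case=> i hil /BE [hxQ hd].
  have hx : forall m, u ^+ (i + l * m) != y /\ v (u ^+ (i + l * m) - y) = A i.
    by move=> m; split; [exact: xny | exact: Acst].
  exact: KB hx x hxQ hd.
move=> i j hi hj hij x [/BE [_ hdi] /BE [_ hdj]].
have [eqF [f0 vf]] := Fdiff (xny i) (xny j).
have [uu0' uuv] := uu0 hi hj hij.
have hne : F (u ^+ i) - F (u ^+ j) != 0 by rewrite eqF mulf_neq0.
have vF : v (F (u ^+ i) - F (u ^+ j)) = vd + v y - (A i + A j) by rewrite eqF vM // uuv addr0 vf.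
have hmin : dv (Num.min (e i) (e j)) (F (u ^+ i) - F (u ^+ j)).
  have -> : F (u ^+ i) - F (u ^+ j) = (x - F (u ^+ j)) - (x - F (u ^+ i)) by ring.
  by apply: dvB; [apply: dv_le hdj; rewrite ge_min lexx orbT | apply: dv_le hdi; rewrite ge_min lexx].
have hle := dvP hmin hne; rewrite vF in hle.
have hAk : forall t, A t < k.
  move=> t; have ht0 : u ^+ t - y != 0 by rewrite subr_eq0 xny.
  by have := ncl t; rewrite /dv negb_or ht0 /= -ltNge.
have hAi := hAk i; have hAj := hAk j.
have [Ai1 Ai2 Ai3] := Arange (xny i); have [Aj1 Aj2 Aj3] := Arange (xny j).
have k1 := k_ge1.
move: hle hAi hAj Ai1 Ai2 Ai3 Aj1 Aj2 Aj3 k1; rewrite /e /A.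
set ai := v (u ^+ i - y); set aj := v (u ^+ j - y); set vy := v y; set dd := vd.
clear; lia.
Qed.

Lemma ny_of_anz n : a n != 0 -> u ^+ n != y.
Proof. by apply: contraNneq => e; rewrite aE e subrr mulr0. Qed.

Lemma Lam_cls i : vclosure v (fun _ => True) (fun y0 => exists n : nat, y0 = u ^+ n) y ->
  (forall n, exists m, u ^+ n = u ^+ (i + l * m)) -> dv k (u ^+ i - y).
Proof.
move=> [_ hL] hcls.
have [y1 [[n ->] hc]] := hL k.
have [m hm] := hcls n.
move/vcloseE: hc; rewrite hm => hc.
have -> : u ^+ i - y = (u ^+ (i + l * m) - y) - (u ^+ (i + l * m) - u ^+ i) by ring.
by apply: dvB => //; apply: dv_class.
Qed.

Lemma Fal_v n : u ^+ n != y -> u ^+ n + y != 0 -> v (u ^+ n + y) = 0 ->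
  F (u ^+ n) - al != 0 /\ v (F (u ^+ n) - al) = vd - v (u ^+ n - y).
Proof.
move=> h1 h2 h3; have [t0 t1] := two0.
have h1' : u ^+ n - y != 0 by rewrite subr_eq0.
rewrite Fal //; split; first by rewrite !mulf_neq0 ?invr_eq0 ?mulf_neq0 ?l12.
by rewrite vdiv ?mulf_neq0 ?l12 // !vM ?l12 // h3 t1 addr0 add0r.
Qed.

Lemma part2 : vclosure v (fun _ => True) (fun y0 => exists n : nat, y0 = u ^+ n) y -> l = 1%N ->
  forall x, kepler_set v Qp a x <-> (x \in Qp /\ ~ pball v Qp ((lam1 + lam2) / 2) (1 + v lam2) x).
Proof.
move=> hL hl1 x.
have xn : forall n, u ^+ n = u ^+ (0 + l * n) by move=> n; rewrite hl1 mul1n add0n.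
have hy1 : dv k (u ^+ 0 - y) by apply: (Lam_cls hL) => n; exists n.
have vy := vy0 hy1.
have vuk : v (u - 1) = k by rewrite hk hl1 expr1.
have vdE : vd = v lam1 + k.
  have -> : lam2 - lam1 = lam1 * (u - 1) by field.
  have u1 : u - 1 != 0 by rewrite subr_eq0 -(expr1 u) -hl1 w1.
  by rewrite vM // vuk.
split.
  case=> hxQ hcl; split => //; case=> _ hp.
  have [y1 [[n [an0 ->]] hc]] := hcl (1 + v lam2).
  have hn := ny_of_anz an0.
  have hdn : dv k (u ^+ n - y) by rewrite xn; apply: dvxy.
  have [xy0 vxy] := xplusy vy hdn.
  have [f0 vf] := Fal_v hn xy0 vxy.
  have hd : dv (1 + v lam2) (F (u ^+ n) - al).
    move/vcloseE: hc; move/vcloseE: hp; rewrite ratioE // => hp hc.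
    have -> : F (u ^+ n) - al = (F (u ^+ n) - x) + (x - al) by ring.
    exact: dvD.
  have := dvP hd f0; rewrite vf vdE.
  have hn' : u ^+ n - y != 0 by rewrite subr_eq0.
  have := dvP hdn hn'; have := hv12.
  set t := v (u ^+ n - y); set l1 := v lam1; set l2 := v lam2.
  clear; lia.
case=> hxQ np.
have hxa : x != al.
  apply/negP => /eqP e; apply: np; split => //; left; exact: e.
apply: (KC hy1 hxQ hxa).
have : ~ (1 + v lam2 <= v (x - al)).
  by move=> h; apply: np; split => //; right.
rewrite vdE; have := hv12.
set t := v (x - al); set l1 := v lam1; set l2 := v lam2.
clear; lia.
Qed.

Lemma ui0 i : u ^+ i = u ^+ (i + l * 0). Proof. by rewrite muln0 addn0. Qed.

Lemma al_dv : dv (v lam1) al.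
Proof.
have [t0 t1] := two0.
rewrite -[v lam1]addr0; apply: dvM.
  by apply: dvD; apply: dvI; rewrite ?hv12.
by apply: dvI; rewrite vV // t1 oppr0.
Qed.

Lemma part3 : vclosure v (fun _ => True) (fun y0 => exists n : nat, y0 = u ^+ n) y -> (2 <= l)%N ->
  forall s0 : nat, (s0 < l)%N -> vclose v k ((lam2 / lam1) ^+ s0) (- (c1 / c2)) ->
  let B := fun i : nat => pball v Qp (a i.+1 / a i) (v (lam2 - lam1) + k) in
  let C := fun x => x \in Qp /\ ~ pball v Qp 0 (v lam2 + 1 - k) x in
  (forall x, kepler_set v Qp a x <-> ((exists2 i : nat, (i < l)%N /\ i <> s0 & B i x) \/ C x)) /\
  (forall i j : nat, (i < l)%N -> (j < l)%N -> i <> s0 -> j <> s0 -> i <> j ->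
     forall x, ~ (B i x /\ B j x)) /\
  (forall i : nat, (i < l)%N -> i <> s0 -> forall x, ~ (B i x /\ C x)).
Proof.
move=> _ hl2 s0 hs0l /vcloseE hs0 B C.
have vy := vy0 hs0.
have k1 := k_ge1.
have vdE : vd = v lam1.
  have [u1 vu1] := ord_small (isT : (0 < 1)%N) hl2; rewrite expr1 in u1 vu1.
  have -> : lam2 - lam1 = lam1 * (u - 1) by field.
  by rewrite vM // vu1 addr0.
have hxi : forall i, (i < l)%N -> i <> s0 -> forall m,
    u ^+ (i + l * m) != y /\ v (u ^+ (i + l * m) - y) = 0.
  move=> i hil hne m.
  have [h0 hv0] := uu0 hil hs0l hne.
  have hd : dv (v (u ^+ i - u ^+ s0) + 1) ((u ^+ (i + l * m) - u ^+ i) + (u ^+ s0 - y)).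
    rewrite hv0 add0r; apply: dv_le k1 _; apply: dvD => //; exact: dv_class.
  have [h1 h2] := vD_lt h0 hd.
  have e : u ^+ i - u ^+ s0 + (u ^+ (i + l * m) - u ^+ i + (u ^+ s0 - y)) = u ^+ (i + l * m) - y by ring.
  by rewrite e in h1 h2; rewrite -subr_eq0 h1 h2 hv0.
have BE : forall i, (i < l)%N -> i <> s0 -> forall x,
    B i x <-> x \in Qp /\ dv (vd + k) (x - F (u ^+ i)).
  move=> i hil hne x; have hi0 := (hxi i hil hne 0%N).1; rewrite -ui0 in hi0.
  rewrite /B /pball ratioE //; split; case=> h1 h2; split => //; by apply/vcloseE.
have Fi_dv : forall i, (i < l)%N -> i <> s0 -> dv (v lam1) (F (u ^+ i)).
  move=> i hil hne; have [hi0 hiv] := hxi i hil hne 0%N; rewrite -ui0 in hi0 hiv.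
  have hi0' : u ^+ i - y != 0 by rewrite subr_eq0.
  have -> : F (u ^+ i) = lam1 * ((u * u ^+ i - y) * (u ^+ i - y)^-1) by rewrite mulrA.
  rewrite -[v lam1]addr0 -[0 in X in dv X _]addr0; apply: dvM; first by apply: dvI.
  apply: dvM; first by rewrite -exprS; apply: dvB; [exact: hu | apply: dvI; rewrite vy].
  by apply: dvI; rewrite vV // hiv oppr0.
split.
  move=> x; split.
    case=> hxQ hcl.
    have [y1 [[n [an0 ->]] hc]] := hcl (v lam2 + k).
    have hn := ny_of_anz an0.
    move/vcloseE: hc; rewrite ratioE // => hc.
    set i := (n %% l)%N.
    have hil : (i < l)%N by rewrite ltn_pmod // l_gt0.
    case: (eqVneq i s0) => [his|hne].
      right; split => //.
      have hdn : dv k (u ^+ n - y).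
        have -> : u ^+ n - y = (u ^+ n - u ^+ i) + (u ^+ i - y) by ring.
        by apply: dvD; [exact: dv_mod | rewrite his].
      have [xy0 vxy] := xplusy vy hdn.
      have [f0 vf] := Fal_v hn xy0 vxy.
      have hn' : u ^+ n - y != 0 by rewrite subr_eq0.
      have hk' := dvP hdn hn'.
      have hd1 : dv (v (F (u ^+ n) - al) + 1) al.
        apply: dv_le al_dv; rewrite vf -vdE; move: hk' k1; clear; lia.
      have [F0 vF] := vD_lt f0 hd1; rewrite subrK in F0 vF.
      have hd2 : dv (v (F (u ^+ n)) + 1) (x - F (u ^+ n)).
        have := dvN hc; rewrite opprB => h; apply: dv_le h.
        rewrite vF vf vdE hv12; move: hk' k1; clear; lia.
      have [x0 vx] := vD_lt F0 hd2; rewrite addrC subrK in x0 vx.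
      case=> _ [hx0|hle]; first by move: x0; rewrite hx0 eqxx.
      move: hle; rewrite subr0 vx vF vf vdE hv12; move: hk' k1; clear; lia.
    have hne' : i <> s0 := elimN eqP hne.
    left; exists i => //; apply/(BE i hil hne'); split => //.
    have [hn0 hnv] := hxi i hil (elimN eqP hne) (n %/ l)%N; rewrite -divE in hn0 hnv.
    have [hi0 hiv] := hxi i hil (elimN eqP hne) 0%N; rewrite -ui0 in hi0 hiv.
    have [eqF [f0 vf]] := Fdiff hn hi0.
    have d1 : dv (vd + k) (F (u ^+ n) - F (u ^+ i)).
      rewrite eqF; have := dvMl f0 vf (dv_mod n); rewrite hnv hiv vy !addr0.
      by move=> h; exact: h.
    have d2 : dv (vd + k) (x - F (u ^+ n)).
      by move: (dvN hc); rewrite opprB vdE hv12.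
    have -> : x - F (u ^+ i) = (x - F (u ^+ n)) + (F (u ^+ n) - F (u ^+ i)) by ring.
    exact: dvD.
  case=> [[i [hil hne] /(BE i hil hne) [hxQ hd]] | [hxQ hnp]].
    apply: (KB (i := i) (A := 0) (hxi i hil hne) hxQ).
    by have -> : vd + v y + k - (0 + 0) = vd + k by rewrite vy; ring.
  have x0 : x != 0.
    by apply/negP => /eqP hx0; apply: hnp; split => //; left.
  have hvx : v x <= v lam2 - k.
    have : ~ (v lam2 + 1 - k <= v x) by move=> h; apply: hnp; split => //; right; rewrite subr0.
    by clear; lia.
  have hd : dv (v x + 1) (- al).
    apply: dvN; apply: dv_le al_dv; rewrite hv12; move: hvx k1; clear; lia.
  have [xa0 vxa] := vD_lt x0 hd.
  apply: (KC hs0 hxQ); first by rewrite -subr_eq0.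
  by rewrite vxa vdE hv12.
split.
  move=> i j hi hj hi0 hj0 hij x [/(BE i hi hi0) [_ di] /(BE j hj hj0) [_ dj]].
  have [h0i hvi] := hxi i hi hi0 0%N; have [h0j hvj] := hxi j hj hj0 0%N.
  rewrite -!ui0 in h0i hvi h0j hvj.
  have [eqF [f0 vf]] := Fdiff h0i h0j.
  have [uu0' uuv] := uu0 hi hj hij.
  have hne : F (u ^+ i) - F (u ^+ j) != 0 by rewrite eqF mulf_neq0.
  have vF : v (F (u ^+ i) - F (u ^+ j)) = vd.
    by rewrite eqF vM // uuv addr0 vf hvi hvj vy; ring.
  have : dv (vd + k) (F (u ^+ i) - F (u ^+ j)).
    have -> : F (u ^+ i) - F (u ^+ j) = (x - F (u ^+ j)) - (x - F (u ^+ i)) by ring.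
    exact: dvB.
  move/dvP/(_ hne); rewrite vF; move: k1; clear; lia.
move=> i hi hi0 x [/(BE i hi hi0) [hxQ di] [_ np]]; apply: np; split => //.
have hx : dv (v lam1) x.
  have -> : x = F (u ^+ i) + (x - F (u ^+ i)) by ring.
  apply: dvD; first exact: Fi_dv.
  apply: dv_le di; rewrite vdE; move: k1; clear; lia.
case: (eqVneq x 0) => [->|x0]; [by left | right].
rewrite subr0; have := dvP hx x0; rewrite hv12; move: k1; clear; lia.
Qed.
End Val.

Unset Implicit Arguments.
Theorem theorem2 (p : nat) (L : fieldType) (v : L -> int) (Qp : {pred L})
  (a : nat -> L) (r s c1 c2 lam1 lam2 : L) (l : nat) (k : int) :
  prime p -> (2 < p)%N ->
  is_Qp_in p v Qp -> Qp_or_unramified_quadratic v Qp ->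
  (forall n, a n \in Qp) -> r \in Qp -> s \in Qp ->
  (forall n : nat, a n.+2 = r * a n.+1 + s * a n) ->
  (forall n : nat, a n = c1 * lam1 ^+ n + c2 * lam2 ^+ n) ->
  c1 != 0 -> c2 != 0 -> lam1 != 0 -> lam2 != 0 ->
  v lam1 = v lam2 ->
  (forall n : nat, (0 < n)%N -> (lam2 / lam1) ^+ n != 1) ->
  order_modp v (lam2 / lam1) l ->
  k = v ((lam2 / lam1) ^+ l - 1) ->
  let K := kepler_set v Qp a in
  let Lam := vclosure v (fun _ => True) (fun y => exists n : nat, y = (lam2 / lam1) ^+ n) in
  (* 1. *)
  (~ Lam (- (c1 / c2)) ->
     let B := fun i : nat => pball v Qp (a i.+1 / a i)
        (v (c1 / c2) + v (lam2 - lam1) - 2 * v (c1 / c2 + (lam2 / lam1) ^+ i) + k) in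
     (forall x, K x <-> exists2 i : nat, (i < l)%N & B i x) /\
     (forall i j : nat, (i < l)%N -> (j < l)%N -> i <> j -> forall x, ~ (B i x /\ B j x)))
  /\
  (* 2. *)
  (Lam (- (c1 / c2)) -> l = 1%N ->
     forall x, K x <-> (x \in Qp /\ ~ pball v Qp ((lam1 + lam2) / 2) (1 + v lam2) x))
  /\
  (* 3. *)
  (Lam (- (c1 / c2)) -> (2 <= l)%N ->
     forall s0 : nat, (s0 < l)%N -> vclose v k ((lam2 / lam1) ^+ s0) (- (c1 / c2)) ->
     let B := fun i : nat => pball v Qp (a i.+1 / a i) (v (lam2 - lam1) + k) in
     let C := fun x => x \in Qp /\ ~ pball v Qp 0 (v lam2 + 1 - k) x in
     (forall x, K x <-> ((exists2 i : nat, (i < l)%N /\ i <> s0 & B i x) \/ C x)) /\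
     (forall i j : nat, (i < l)%N -> (j < l)%N -> i <> s0 -> j <> s0 -> i <> j ->
        forall x, ~ (B i x /\ B j x)) /\
     (forall i : nat, (i < l)%N -> i <> s0 -> forall x, ~ (B i x /\ C x))).

Proof.
move=> pr p2 hQ _ haQ hrQ _ hrec ha c10 c20 l10 l20 hv12 hroot hord hk K Lam.
case: hQ => hval hsub hchar hres _; case: hval => hvM hvD hvp.
split; [|split].
- by eapply part1; eassumption.
- by eapply part2; eassumption.
- by eapply part3; eassumption.
Qed.
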